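(* Let $M$ be a multiplicity free object of a nonzero finite abelian category $\mathcal C$ over $\mathbb F$, and $\sigma\in\mathrm{JH}(M)$. Then there is an extension path in the radical filtration of length $d^M_{\mathrm{rad}}(\sigma)$ ending with $\sigma$, and an extension path in the socle filtration of length $d_M^{\mathrm{soc}}(\sigma)$ beginning with $\sigma$.
   Context: $\mathcal C$ is an $\mathbb F$-linear abelian category all of whose objects have finite length. Radical filtration: $\mathrm{rad}^0M=M$, $\mathrm{rad}^nM=\mathrm{rad}(\mathrm{rad}^{n-1}M)$; socle filtration: $\mathrm{soc}_{-1}M=0$, $\mathrm{soc}_nM$ = preimage of $\mathrm{soc}(M/\mathrm{soc}_{n-1}M)$. For $M$ multiplicity free and $\sigma\in\mathrm{JH}(M)$, $d^M_{\mathrm{rad}}(\sigma)$ (resp. $d_M^{\mathrm{soc}}(\sigma)$) is the unique $n$ with $\sigma$ a constituent of $\mathrm{rad}^nM/\mathrm{rad}^{n+1}M$ (resp. $\mathrm{soc}_nM/\mathrm{soc}_{n-1}M$). $\sigma$ points to $\sigma'$ if the subquotient of $M$ which is an extension $0\to\sigma'\to X\to\sigma\to0$ is nonsplit; for a filtration $\mathscr F$, $\sigma$ $\mathscr F$-points to $\sigma'$ if moreover the filtration induced by $\mathscr F$ on $X$ has exactly two nonzero graded pieces. An extension path in $\mathscr F$ of length $n$ is a sequence $\sigma_0\to\sigma_1\to\dots\to\sigma_n$ in $\mathrm{JH}(M)$ with each $\sigma_k$ $\mathscr F$-pointing to $\sigma_{k+1}$; it begins with $\sigma_0$ and ends with $\sigma_n$.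 *)

(* Defs.v *)
(* An object M of a finite abelian F-linear category is
   modelled as a finite-dimensional module over a finite-dimensional
   F-algebra: the vector space 'rV[F]_n together with the action of finitely
   many generators  act : 'I_k -> 'M[F]_n  (row vectors, acting on the right).
   Sub(quotient)objects of M are submodules (row spaces stable under all
   act i) and their quotients. *)
From mathcomp Require Import all_boot all_order all_algebra.
Set Implicit Arguments.
Unset Strict Implicit.
Unset Printing Implicit Defensive.
Import GRing.Theory.
Local Open Scope ring_scope.

Section Defs.
Variables (F : fieldType) (n k : nat) (act : 'I_k -> 'M[F]_n).

Definition submod (U : 'M[F]_n) : Prop := forall i, (U *m act i <= U)%MS.

Definition simple_sq (x : 'M[F]_n * 'M[F]_n) : Prop :=
  [/\ submod x.1, submod x.2, (x.2 < x.1)%MS &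
      forall V : 'M[F]_n, submod V -> (x.2 <= V)%MS -> (V <= x.1)%MS ->
        (V == x.2)%MS \/ (V == x.1)%MS].

(* isomorphism of the subquotients x.1/x.2 and y.1/y.2 (as modules):
   given by a linear map v |-> v *m f *)
Definition sq_iso (x y : 'M[F]_n * 'M[F]_n) : Prop :=
  exists f : 'M[F]_n,
  [/\ (x.1 *m f <= y.1)%MS, (x.2 *m f <= y.2)%MS,
      forall i, (x.1 *m (act i *m f - f *m act i) <= y.2)%MS,
      (y.1 <= x.1 *m f + y.2)%MS &
      forall v : 'rV[F]_n, (v <= x.1)%MS -> (v *m f <= y.2)%MS -> (v <= x.2)%MS].

Definition comp_series (m : nat) (c : nat -> 'M[F]_n) : Prop :=
  [/\ (c 0%N == (0 : 'M[F]_n))%MS, (c m == 1%:M)%MS &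
      forall j, (j < m)%N -> simple_sq (c j.+1, c j)].

Definition mult_free : Prop :=
  forall m c, comp_series m c ->
  forall i j, (i < m)%N -> (j < m)%N ->
    sq_iso (c i.+1, c i) (c j.+1, c j) -> i = j.

(* R = rad U : intersection (inside U) of the maximal submodules of U *)
Definition is_rad (U R : 'M[F]_n) : Prop :=
  [/\ (R <= U)%MS,
      forall X, simple_sq (U, X) -> (R <= X)%MS &
      forall T : 'M[F]_n, (T <= U)%MS ->
        (forall X, simple_sq (U, X) -> (T <= X)%MS) -> (T <= R)%MS].

(* S / W = soc (M / W) : S is the sum of W and all X with X/W simple *)
Definition is_soc_over (W S : 'M[F]_n) : Prop :=
  [/\ (W <= S)%MS,
      forall X, simple_sq (X, W) -> (X <= S)%MS &
      forall T : 'M[F]_n, (W <= T)%MS ->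
        (forall X, simple_sq (X, W) -> (X <= T)%MS) -> (S <= T)%MS].

Definition radical_filtration (Rad : nat -> 'M[F]_n) : Prop :=
  (Rad 0%N == 1%:M)%MS /\ forall j, is_rad (Rad j) (Rad j.+1).

(* Soc j = soc_j M  (with soc_{-1} M = 0) *)
Definition soc_prev (Soc : nat -> 'M[F]_n) (j : nat) : 'M[F]_n :=
  if j is j'.+1 then Soc j' else (0 : 'M[F]_n).

Definition socle_filtration (Soc : nat -> 'M[F]_n) : Prop :=
  forall j, is_soc_over (soc_prev Soc j) (Soc j).

(* A filtration is described by its graded pieces top j / bot j. *)

Definition constituent (top bot : 'M[F]_n) (sigma : 'M[F]_n * 'M[F]_n) : Prop :=
  exists U W : 'M[F]_n,
    [/\ (bot <= W)%MS, (U <= top)%MS, simple_sq (U, W) & sq_iso (U, W) sigma].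

(* the j-th graded piece of the filtration induced on the subquotient U/W
   is nonzero *)
Definition induced_piece_nz (top bot : nat -> 'M[F]_n) (U W : 'M[F]_n) (j : nat)
  : Prop := ~ ((top j :&: U + W) == (bot j :&: U + W))%MS.

Definition points_to (top bot : nat -> 'M[F]_n) (s s' : 'M[F]_n * 'M[F]_n) : Prop :=
  exists U U' W : 'M[F]_n,
  [/\ simple_sq (U', W) /\ simple_sq (U, U'), sq_iso (U', W) s' /\ sq_iso (U, U') s,
      (* the extension 0 -> U'/W -> U/W -> U/U' -> 0 is nonsplit *)
      ~ (exists V : 'M[F]_n, [/\ submod V, (W <= V)%MS,
             (V :&: U' == W)%MS & (V + U' == U)%MS]) &
      (* the induced filtration on U/W has exactly two nonzero graded pieces *)
      exists i j, [/\ i <> j, induced_piece_nz top bot U W i,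
                      induced_piece_nz top bot U W j &
                      forall l, l <> i -> l <> j -> ~ induced_piece_nz top bot U W l]].

Definition ext_path (top bot : nat -> 'M[F]_n) (len : nat)
  (p : nat -> 'M[F]_n * 'M[F]_n) : Prop :=
  (forall l, (l <= len)%N -> simple_sq (p l)) /\
  (forall l, (l < len)%N -> points_to top bot (p l) (p l.+1)).

End Defs.

(* Main.v *)
Require Import Defs.
From mathcomp Require Import all_boot all_order all_algebra.
From Stdlib Require Import Classical.
From mathcomp Require Import zify.
Set Implicit Arguments.
Unset Strict Implicit.
Unset Printing Implicit Defensive.
Import GRing.Theory.
Section H.
Local Open Scope ring_scope.
Variables (F : fieldType) (n k : nat) (act : 'I_k -> 'M[F]_n).
Local Notation submod := (submod act).
Local Notation simple_sq := (simple_sq act).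
Local Notation sq_iso := (sq_iso act).

Lemma modl (A B C : 'M[F]_n) : (A <= C)%MS -> ((A + B) :&: C <= A + B :&: C)%MS.
Proof. by move=> h; rewrite (matrix_modl B h). Qed.

Lemma submod_cap U V : submod U -> submod V -> submod (U :&: V)%MS.
Proof.
move=> hU hV i; rewrite sub_capmx.
by rewrite (submx_trans (submxMr _ (capmxSl _ _)) (hU i)) (submx_trans (submxMr _ (capmxSr _ _)) (hV i)).
Qed.

Lemma submod_add U V : submod U -> submod V -> submod (U + V)%MS.
Proof.
move=> hU hV i; rewrite (addsmxMr U V (act i)) addsmx_sub.
by rewrite (submx_trans (hU i) (addsmxSl _ _)) (submx_trans (hV i) (addsmxSr _ _)).
Qed.

Lemma simpleP U X V : simple_sq (U, X) -> submod V -> (X <= V)%MS -> (V <= U)%MS ->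
  (V <= X)%MS \/ (U <= V)%MS.
Proof.
case=> _ _ _ /= h sV h1 h2; case: (h V sV h1 h2) => /andP[a b]; by [left|right].
Qed.

Lemma simple_prop U X : simple_sq (U, X) ->
  [/\ submod U, submod X, (X <= U)%MS & ~~ (U <= X)%MS].
Proof. by case=> /= a b; rewrite ltmxE => /andP[c d]. Qed.

Lemma mk_simple U X : submod U -> submod X -> (X <= U)%MS -> ~~ (U <= X)%MS ->
  (forall V, submod V -> (X <= V)%MS -> (V <= U)%MS -> (V <= X)%MS \/ (U <= V)%MS) ->
  simple_sq (U, X).
Proof.
move=> a b c d h; split=> //=; first by rewrite ltmxE c d.
move=> V sV h1 h2; case: (h V sV h1 h2) => e; [left|right]; apply/andP; split=> //.
Qed.

Lemma sq_iso_refl x : sq_iso x x.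
Proof.
exists 1%:M; split; rewrite ?mulmx1 ?submx_refl ?addsmxSl //; try (move=> v; by rewrite mulmx1).

by move=> i; rewrite mulmx1 mul1mx subrr mulmx0 sub0mx.
Qed.


Lemma ex_max (P : 'M[F]_n -> Prop) V0 : P V0 ->
  exists W, [/\ P W, (V0 <= W)%MS & forall V, P V -> (W <= V)%MS -> (V <= W)%MS].
Proof.
move: {2}(n - \rank V0)%N (leqnn (n - \rank V0)%N) => m.
elim: m V0 => [|m IH] V0 hm hP.
  exists V0; split=> // V hV h; apply/idPn => hn.
  have : (\rank V0 < \rank V)%N by move: (ltmxErank V0 V); rewrite ltmxE h hn /= => <-.
  have := rank_leq_col V; move: hm; rewrite leqn0 subn_eq0 => h1 h2 h3.
  by move: (leq_trans h3 h2); rewrite ltnNge h1.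
case: (classic (exists V, P V /\ (V0 <= V)%MS /\ ~~ (V <= V0)%MS)) => [[V [hV [h1 h2]]]|hno].
  have hr : (\rank V0 < \rank V)%N by move: (ltmxErank V0 V); rewrite ltmxE h1 h2 /= => <-.
  have hm' : (n - \rank V <= m)%N.
    have := rank_leq_col V => hV'; rewrite leq_subLR; move: hm; rewrite leq_subLR; lia.
  have [W [hW hVW hmax]] := IH V hm' hV.
  by exists W; split=> //; apply: submx_trans hVW.
exists V0; split=> // V hV h; apply/idPn => hn; apply: hno; exists V; split=> //; split=> //; exact/negP.
Qed.

Lemma ex_min (P : 'M[F]_n -> Prop) V0 : P V0 ->
  exists W, [/\ P W, (W <= V0)%MS & forall V, P V -> (V <= W)%MS -> (W <= V)%MS].
Proof.
move: {2}(\rank V0) (leqnn (\rank V0)) => m.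
elim: m V0 => [|m IH] V0 hm hP.
  exists V0; split=> // V hV h; apply/idPn => hn.
  have : (\rank V < \rank V0)%N by move: (ltmxErank V V0); rewrite ltmxE h hn /= => <-.
  by move: hm; rewrite leqn0 => /eqP ->.
case: (classic (exists V, P V /\ (V <= V0)%MS /\ ~~ (V0 <= V)%MS)) => [[V [hV [h1 h2]]]|hno].
  have hr : (\rank V < \rank V0)%N by move: (ltmxErank V V0); rewrite ltmxE h1 h2 /= => <-.
  have hm' : (\rank V <= m)%N by lia.
  have [W [hW hVW hmax]] := IH V hm' hV.
  by exists W; split=> //; apply: submx_trans h1.
exists V0; split=> // V hV h; apply/idPn => hn; apply: hno; exists V; split=> //; split=> //; exact/negP.
Qed.

Lemma ex_simple_above V Z : submod V -> submod Z -> (V <= Z)%MS -> ~~ (Z <= V)%MS ->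
  exists W, [/\ (V <= W)%MS & simple_sq (Z, W)].
Proof.
move=> sV sZ hVZ hn.
have [W [[sW [hWZ hZW]] hVW hmax]] :=
  @ex_max (fun W => submod W /\ (W <= Z)%MS /\ ~~ (Z <= W)%MS) V (conj sV (conj hVZ hn)).
exists W; split=> //; apply: mk_simple => // U sU h1 h2.
case hZU: (Z <= U)%MS; [by right | left]; apply: hmax => //; split=> //; split=> //; by rewrite hZU.
Qed.

Lemma ex_simple_below V Z : submod V -> submod Z -> (V <= Z)%MS -> ~~ (Z <= V)%MS ->
  exists U, [/\ (U <= Z)%MS & simple_sq (U, V)].
Proof.
move=> sV sZ hVZ hn.
have [U [[sU [hVU hUV]] hUZ hmin]] :=
  @ex_min (fun U => submod U /\ (V <= U)%MS /\ ~~ (U <= V)%MS) Z (conj sZ (conj hVZ hn)).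
exists U; split=> //; apply: mk_simple => // W sW h1 h2.
case hWV: (W <= V)%MS; [by left | right]; apply: hmin => //; split=> //; split=> //; by rewrite hWV.
Qed.


Lemma persp_rev X1 X2 W : submod X1 -> submod W -> (X2 <= X1)%MS -> (X2 <= W)%MS ->
  (X1 :&: W <= X2)%MS -> sq_iso ((X1 + W)%MS, W) (X1, X2).
Proof.
move=> s1 sW h21 h2W hcap.
set C := (W :\: X2)%MS.
have hCW : (C <= W)%MS by apply: diffmxSl.
have h0 : (X1 :&: C)%MS = 0.
  apply/eqP; rewrite -submx0 -(capmx_diff W X2) sub_capmx capmxSr /=.
  apply: submx_trans hcap; rewrite sub_capmx capmxSl /=.
  exact: submx_trans (capmxSr _ _) hCW.
have hWC : (W <= X2 + C)%MS.
  have e := addsmx_diff_cap_eq W X2.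
  have : (W <= C + W :&: X2)%MS by rewrite e.
  by move=> h; apply: submx_trans h _; rewrite addsmxC addsmxS // capmxSr.
set f := proj_mx X1 C.
have hid : forall m (Z : 'M[F]_(m, n)), (Z <= X1)%MS -> Z *m f = Z.
  by move=> m Z hZ; apply: proj_mx_id.
have hz : C *m f = 0 by apply: proj_mx_0.
have hsub : forall m (Z : 'M[F]_(m, n)), (Z *m f <= X1)%MS by move=> m Z; apply: proj_mx_sub.
have hcomp : forall (v : 'rV[F]_n), (v <= X1 + C)%MS -> (v - v *m f <= C)%MS.
  by move=> v hv; apply: proj_mx_compl_sub.
clearbody f.
have G : forall m (Z : 'M[F]_(m, n)), (Z <= X2 + C)%MS -> (Z *m f <= X2)%MS.
  move=> m Z hZ; apply: submx_trans (submxMr f hZ) _.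
  by rewrite (addsmxMr X2 C f) addsmx_sub (hid _ _ h21) submx_refl /= hz sub0mx.
have hWX1C : (X1 + W <= X1 + C)%MS.
  by rewrite addsmx_sub addsmxSl /= (submx_trans hWC) // addsmxS.
exists f; split=> /=.
- exact: hsub.
- apply: G; exact: hWC.
- move=> i; apply: submx_trans (submxMr _ hWX1C) _.
  rewrite (addsmxMr X1 C) addsmx_sub; apply/andP; split.
    by rewrite mulmxBr !mulmxA (hid _ _ (submx_refl X1)) (hid _ _ (s1 i)) subrr sub0mx.
  rewrite mulmxBr !mulmxA hz mul0mx subr0.
  apply: G; apply: submx_trans hWC; apply: submx_trans (sW i).
  exact: submxMr.
- rewrite -{1}(hid _ _ (submx_refl X1)); apply: submx_trans (addsmxSl _ _); apply: submxMr; exact: addsmxSl.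
- move=> v hv hvf.
  have hv' : (v <= X1 + C)%MS := submx_trans hv hWX1C.
  have hc := hcomp v hv'.
  rewrite -(subrK (v *m f) v); apply: submx_trans (addmx_sub_adds hc hvf) _.
  by rewrite addsmx_sub hCW h2W.
Qed.


Lemma rad_submod U R : submod U -> is_rad act U R -> submod R.
Proof.
move=> sU [h1 h2 h3] i; apply: h3.
  exact: submx_trans (submxMr _ h1) (sU i).
move=> X hX; have [_ sX _ _] := simple_prop hX.
exact: submx_trans (submxMr _ (h2 X hX)) (sX i).
Qed.

Lemma rad_facts Rad : radical_filtration act Rad ->
  forall j, submod (Rad j) /\ (Rad j.+1 <= Rad j)%MS.
Proof.
case=> h0 hR; elim=> [|j [IH _]].
  have s0 : submod (Rad 0%N).
    move=> i; move/andP: h0 => [_ h]; exact: submx_trans (submx1 _) h.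
  by split=> //; case: (hR 0%N).
have s1 := rad_submod IH (hR j); split=> //; by case: (hR j.+1).
Qed.

Lemma rad_mono Rad : radical_filtration act Rad ->
  forall i j, (i <= j)%N -> (Rad j <= Rad i)%MS.
Proof.
move=> hR i j /subnK <-; elim: (j - i)%N => [|m IH]; first by rewrite add0n.
rewrite addSn; apply: submx_trans IH; exact: (rad_facts hR _).2.
Qed.

Lemma soc_submod W S : submod W -> is_soc_over act W S -> submod S.
Proof.
move=> sW [h1 h2 h3] i.
set T0 := (S :&: kermx (act i *m cokermx S))%MS.
have : (S <= T0)%MS.
  apply: h3.
    rewrite sub_capmx h1 /= sub_kermx mulmxA -submxE.
    exact: submx_trans (sW i) h1.
  move=> X hX; have [sX _ _ _] := simple_prop hX.
  rewrite sub_capmx (h2 X hX) /= sub_kermx mulmxA -submxE.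
  exact: submx_trans (sX i) (h2 X hX).
by rewrite sub_capmx sub_kermx mulmxA -submxE => /andP[].
Qed.

Lemma soc_facts Soc : socle_filtration act Soc ->
  forall j, submod (soc_prev Soc j) /\ submod (Soc j) /\ (soc_prev Soc j <= Soc j)%MS.
Proof.
move=> hS; elim=> [|j [_ [IH _]]].
  have s0 : submod (soc_prev Soc 0%N) by move=> i; rewrite /= mul0mx sub0mx.
  split=> //; split; [exact: soc_submod s0 (hS 0%N) | by case: (hS 0%N)].
split=> //; split; [exact: soc_submod IH (hS j.+1) | by case: (hS j.+1)].
Qed.

Lemma soc_mono Soc : socle_filtration act Soc ->
  forall i j, (i <= j)%N -> (Soc i <= Soc j)%MS.
Proof.
move=> hS i j /subnK <-; elim: (j - i)%N => [|m IH]; first by rewrite add0n.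
rewrite addSn; apply: submx_trans IH _; exact: (soc_facts hS _.+1).2.2.
Qed.


Lemma crux A R : submod A -> is_rad act A R -> forall (B T : 'M[F]_n), submod B ->
  (R <= B)%MS -> (B <= A)%MS -> (T <= A)%MS -> ~~ (T <= B)%MS ->
  exists Y, [/\ simple_sq (A, Y), (B <= Y)%MS & ~~ (T <= Y)%MS].
Proof.
move=> sA hrad; have [hRA hRX hRT] := hrad.
move=> B T sB hRB hBA hTA hTB.
move: {2}(\rank B) (leqnn (\rank B)) => m.
elim: m B T sB hRB hBA hTA hTB => [|m IH] B T sB hRB hBA hTA hTB hm;
(have [Y0 [hY0 hTY0]] : exists Y0, simple_sq (A, Y0) /\ ~~ (T <= Y0)%MS;
  [ apply: NNPP => hno; move/negP: hTB; apply; apply: submx_trans hRB;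
    apply: hRT => // X hX; apply/idPn => hn; apply: hno; by exists X
  | ]);
(case hBY0: (B <= Y0)%MS; [by exists Y0 | ]);
have [sAA sY0 hY0A hAY0] := simple_prop hY0;
set D := (B :&: Y0)%MS;
(have hrk : (\rank D < \rank B)%N;
  [ have := ltmxErank D B; rewrite ltmxE capmxSl /= sub_capmx submx_refl hBY0 /= => <- // | ]);
first by move: hrk hm; clear; lia.
have hBY0A : (A <= B + Y0)%MS.
  case: (simpleP hY0 (submod_add sB sY0) (addsmxSr _ _) _).
  - by rewrite addsmx_sub hBA hY0A.
  - by rewrite addsmx_sub => /andP[h _]; rewrite h in hBY0.
  - done.
set E := (T + B)%MS.
have hEA : (E <= A)%MS by rewrite addsmx_sub hTA hBA.
set T' := (E :&: Y0)%MS.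
have hT'D : ~~ (T' <= D)%MS.
  apply/negP => h; move/negP: hTB; apply.
  have hE : (E <= B)%MS.
    have h1 : (E <= (B + Y0) :&: E)%MS by rewrite sub_capmx submx_refl (submx_trans hEA hBY0A).
    apply: submx_trans h1 _; apply: submx_trans (modl _ (addsmxSr T B)) _.
    rewrite addsmx_sub submx_refl /= capmxC; exact: submx_trans h (capmxSl _ _).
  exact: submx_trans (addsmxSl _ _) hE.
have sD : submod D by apply: submod_cap.
have hRD : (R <= D)%MS by rewrite sub_capmx hRB hRX.
have hDA : (D <= A)%MS by apply: submx_trans (capmxSl _ _) hBA.
have hT'A : (T' <= A)%MS by apply: submx_trans (capmxSr _ _) hY0A.
have hm' : (\rank D <= m)%N by move: hrk hm; clear; lia.
have [Y1 [hY1 hDY1 hT'Y1]] := IH D T' sD hRD hDA hT'A hT'D hm'.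
have [_ sY1 hY1A hAY1] := simple_prop hY1.
set Y := ((Y1 :&: Y0) + B)%MS.
have hY0Y1 : ~~ (Y0 <= Y1)%MS.
  by apply/negP => h; move/negP: hT'Y1; apply; apply: submx_trans (capmxSr _ _) h.
have key : (Y :&: Y0 <= Y1 :&: Y0)%MS.
  apply: submx_trans (modl _ (capmxSr Y1 Y0)) _.
  by rewrite addsmx_sub submx_refl /= sub_capmx hDY1 capmxSr.
have hBY : (B <= Y)%MS by apply: addsmxSr.
have sY : submod Y by apply: submod_add => //; apply: submod_cap.
exists Y; split=> //.
- apply: mk_simple => //.
  + by rewrite addsmx_sub hBA (submx_trans (capmxSl _ _) hY1A).
  + apply/negP => h; move/negP: hY0Y1; apply.
    apply: submx_trans (capmxSl Y1 Y0); apply: submx_trans key.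
    by rewrite sub_capmx submx_refl (submx_trans hY0A h).
  + move=> V sV hYV hVA.
    have sVY0 : submod (V :&: Y0)%MS by apply: submod_cap.
    case: (simpleP hY1 (submod_add sVY0 sY1) (addsmxSr _ _) _).
    * by rewrite addsmx_sub hY1A (submx_trans (capmxSl _ _) hVA).
    * rewrite addsmx_sub => /andP[h _]; left.
      have hV : (V <= (B + Y0) :&: V)%MS by rewrite sub_capmx submx_refl (submx_trans hVA hBY0A).
      apply: submx_trans hV _; apply: submx_trans (modl _ (submx_trans hBY hYV)) _.
      rewrite /Y addsmxC addsmxS // capmxC sub_capmx h capmxSr //.
    * move=> h; right.
      apply: submx_trans hBY0A _; rewrite addsmx_sub (submx_trans hBY hYV) /=.
      have h1 : (Y0 <= (V :&: Y0 + Y1) :&: Y0)%MS by rewrite sub_capmx submx_refl (submx_trans hY0A h).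
      apply: submx_trans h1 _; apply: submx_trans (modl _ (capmxSr V Y0)) _.
      rewrite addsmx_sub capmxSl /=; apply: submx_trans hYV; exact: addsmxSl.
- apply/negP => h; move/negP: hT'Y1; apply.
  apply: submx_trans (capmxSl Y1 Y0); apply: submx_trans key.
  apply: capmxS (submx_refl _); by rewrite addsmx_sub h hBY.
Qed.


Lemma cruxS W0 S0 : submod W0 -> is_soc_over act W0 S0 -> forall (B T : 'M[F]_n), submod B ->
  (W0 <= B)%MS -> (B <= S0)%MS -> (W0 <= T)%MS -> ~~ (B <= T)%MS ->
  exists Y, [/\ simple_sq (Y, W0), (Y <= B)%MS & ~~ (Y <= T)%MS].
Proof.
move=> sW0 hsoc; have [hWS hXS hST] := hsoc.
move=> B T sB hWB hBS hWT hBT.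
move: {2}(n - \rank B)%N (leqnn (n - \rank B)%N) => m.
elim: m B T sB hWB hBS hWT hBT => [|m IH] B T sB hWB hBS hWT hBT hm;
(have [Y0 [hY0 hY0T]] : exists Y0, simple_sq (Y0, W0) /\ ~~ (Y0 <= T)%MS;
  [ apply: NNPP => hno; move/negP: hBT; apply; apply: submx_trans hBS _;
    apply: hST => // X hX; apply/idPn => hn; apply: hno; by exists X
  | ]);
(case hY0B: (Y0 <= B)%MS; [by exists Y0 | ]);
have [sY0 _ hWY0 hY0W] := simple_prop hY0;
set D := (B + Y0)%MS;
(have hrk : (\rank B < \rank D)%N;
  [ have := ltmxErank B D; rewrite ltmxE addsmxSl /= addsmx_sub submx_refl hY0B /= => <- // | ]);
first by have := rank_leq_col D; move: hrk hm; clear; lia.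
have hcap : (B :&: Y0 <= W0)%MS.
  case: (simpleP hY0 (submod_cap sB sY0) _ (capmxSr _ _)) => //.
  - by rewrite sub_capmx hWB hWY0.
  - by rewrite sub_capmx => /andP[h _]; rewrite h in hY0B.
set T' := ((T :&: B) + Y0)%MS.
have hDT' : ~~ (D <= T')%MS.
  apply/negP => h; move/negP: hBT; apply.
  have h1 : (B <= T' :&: B)%MS by rewrite sub_capmx submx_refl (submx_trans (addsmxSl _ _) h).
  apply: submx_trans h1 _; apply: submx_trans (modl _ (capmxSr T B)) _.
  rewrite addsmx_sub capmxSl /= capmxC; exact: submx_trans hcap hWT.
have sD : submod D by apply: submod_add.
have hWD : (W0 <= D)%MS by apply: submx_trans hWB (addsmxSl _ _).
have hDS : (D <= S0)%MS by rewrite addsmx_sub hBS (hXS _ hY0).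
have hWT' : (W0 <= T')%MS by apply: submx_trans hWY0 (addsmxSr _ _).
have hm' : (n - \rank D <= m)%N by move: hrk hm; clear; lia.
have [Y1 [hY1 hY1D hY1T']] := IH D T' sD hWD hDS hWT' hDT' hm'.
have [sY1 _ hWY1 hY1W] := simple_prop hY1.
set Y := ((Y1 + Y0) :&: B)%MS.
have key : (Y1 + Y0 <= Y + Y0)%MS.
  have h1 : (Y1 + Y0 <= (Y0 + B) :&: (Y1 + Y0))%MS.
    by rewrite sub_capmx submx_refl andbT addsmx_sub addsmxSl andbT addsmxC.
  apply: submx_trans h1 _; apply: submx_trans (modl B (addsmxSr Y1 Y0)) _.
  by rewrite addsmxC [(B :&: _)%MS]capmxC.
have hYB : (Y <= B)%MS by apply: capmxSr.
have hYT : ~~ (Y <= T)%MS.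
  apply/negP => h; move/negP: hY1T'; apply.
  apply: submx_trans (addsmxSl Y1 Y0) _; apply: submx_trans key _.
  apply: addsmxS (submx_refl _); by rewrite sub_capmx h hYB.
have sY : submod Y by apply: submod_cap => //; apply: submod_add.
exists Y; split=> //.
apply: mk_simple => //.
- by rewrite sub_capmx hWB (submx_trans hWY1 (addsmxSl _ _)).
- by apply/negP => h; move/negP: hYT; apply; apply: submx_trans h hWT.
move=> V sV hWV hVY.
have hVB : (V <= B)%MS := submx_trans hVY hYB.
have hVY10 : (V <= Y1 + Y0)%MS := submx_trans hVY (capmxSl _ _).
have sZ : submod ((V + Y0) :&: Y1)%MS by apply: submod_cap => //; apply: submod_add.
case: (simpleP hY1 sZ _ (capmxSr _ _)).
- by rewrite sub_capmx hWY1 (submx_trans hWV (addsmxSl _ _)).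
- move=> hZ; left; apply: submx_trans hcap.
  rewrite sub_capmx hVB /=.
  have h1 : (V <= (Y0 + Y1) :&: (V + Y0))%MS.
    by rewrite sub_capmx addsmxSl andbT addsmxC.
  apply: submx_trans h1 _; apply: submx_trans (modl Y1 (addsmxSr V Y0)) _.
  rewrite addsmx_sub submx_refl /= capmxC; exact: submx_trans hZ hWY0.
- rewrite sub_capmx submx_refl andbT => hY1V; right.
  have h1 : (Y <= (V + Y0) :&: B)%MS.
    apply: capmxS (submx_refl _); by rewrite addsmx_sub hY1V addsmxSr.
  apply: submx_trans h1 _; apply: submx_trans (modl Y0 hVB) _.
  rewrite addsmx_sub submx_refl /= capmxC; exact: submx_trans hcap hWV.
Qed.


Definition layerR (Rad : nat -> 'M[F]_n) d (x : 'M[F]_n * 'M[F]_n) :=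
  [/\ simple_sq x, (x.1 <= Rad d)%MS & ~~ (x.1 <= x.2 + Rad d.+1)%MS].

Lemma radP Rad : radical_filtration act Rad -> forall d x, layerR Rad d x ->
  exists p, ext_path act Rad (fun j => Rad j.+1) d p /\ p d = x.
Proof.
move=> hR; have hRf := rad_facts hR; have hmono := rad_mono hR.
elim=> [|d IH] [X1 X2].
  case=> hx _ _; exists (fun _ => (X1, X2)); split=> //; split=> // l _.
have [sL hAL] := hRf d; have [sA hRA] := hRf d.+1; have [sR _] := hRf d.+2.
case=> /= hx hX1A hX1R.
have [sX1 sX2 h21 h12] := simple_prop hx.
set L := Rad d in sL hAL *; set A := Rad d.+1 in sA hAL hRA hX1A *.
set R := Rad d.+2 in sR hRA hX1R *.
have hX1L : (X1 <= L)%MS := submx_trans hX1A hAL.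
have hRL : (R <= L)%MS := submx_trans hRA hAL.
have hV0L : (X2 + R <= L)%MS by rewrite addsmx_sub hRL (submx_trans h21 hX1L).
have [W [[sW [hVW [hWL hX1W]]] hV0W hmax]] :=
  @ex_max (fun W => submod W /\ (X2 + R <= W)%MS /\ (W <= L)%MS /\ ~~ (X1 <= W)%MS) (X2 + R)%MS
  (conj (submod_add sX2 sR) (conj (submx_refl _)
     (conj hV0L hX1R))).
have hX2W : (X2 <= W)%MS := submx_trans (addsmxSl _ _) hV0W.
have hRW : (R <= W)%MS := submx_trans (addsmxSr _ _) hV0W.
have hb : forall V, submod V -> (W <= V)%MS -> (V <= L)%MS -> ~~ (V <= W)%MS -> (X1 <= V)%MS.
  move=> V sV h1 h2 h3; apply/idPn => hn; move/negP: h3; apply; apply: hmax => //.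
  by split=> //; split; [exact: submx_trans hV0W h1 | split].
have hcap : (X1 :&: W <= X2)%MS.
  case: (simpleP hx (submod_cap sX1 sW) _ (capmxSl _ _)) => //.
  - by rewrite sub_capmx h21 hX2W.
  - by rewrite sub_capmx submx_refl /= => h; rewrite h in hX1W.
set U' := (X1 + W)%MS.
have sU' : submod U' by apply: submod_add.
have hX1U' : (X1 <= U')%MS by apply: addsmxSl.
have hWU' : (W <= U')%MS by apply: addsmxSr.
have hU'L : (U' <= L)%MS by rewrite addsmx_sub hX1L hWL.
have hAU' : (A <= U')%MS.
  have hrad := (hR.2 d.+1).
  have hRB : (R <= A :&: W)%MS by rewrite sub_capmx hRA hRW.
  have hBX : ~~ (X1 <= A :&: W)%MS.
    by apply/negP => h; move/negP: hX1W; apply; apply: submx_trans h (capmxSr _ _).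
  have [Y [hY hBY hX1Y]] := @crux A R sA hrad (A :&: W)%MS X1 (submod_cap sA sW) hRB
     (capmxSl _ _) hX1A hBX.
  have [_ sY hYA _] := simple_prop hY.
  case hYW : (Y <= W)%MS.
    case: (simpleP hY (submod_add sX1 sY) (addsmxSr _ _) _).
    - by rewrite addsmx_sub hX1A hYA.
    - by rewrite addsmx_sub => /andP[h _]; rewrite h in hX1Y.
    - move=> h; apply: submx_trans h _; exact: addsmxS (submx_refl _) hYW.
  have h1 : (X1 <= Y + W)%MS.
    apply: hb; [exact: submod_add | exact: addsmxSr | | ].
    + by rewrite addsmx_sub hWL (submx_trans hYA hAL).
    + by rewrite addsmx_sub hYW.
  have h2 : (X1 <= (Y + W) :&: A)%MS by rewrite sub_capmx h1 hX1A.
  have h3 := submx_trans h2 (modl W hYA).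
  rewrite capmxC in h3.
  have h4 := submx_trans h3 (addsmxS (submx_refl Y) hBY).
  have h5 : (X1 <= Y)%MS by apply: submx_trans h4 _; rewrite addsmx_sub submx_refl.
  by rewrite h5 in hX1Y.
have hLU' : ~~ (L <= U')%MS.
  apply/negP => h.
  have hLW : simple_sq (L, W).
    apply: mk_simple => //.
    - by apply/negP => h'; move/negP: hX1W; apply; apply: submx_trans hX1L h'.
    - move=> V sV h1 h2; case hVW0: (V <= W)%MS; [by left | right].
      apply: submx_trans h _; rewrite addsmx_sub h1 andbT; apply: hb => //; by rewrite hVW0.
  have [_ hAW _] := hR.2 d; move: (hAW W hLW) => hAW'.
  by move/negP: hX1W; apply; apply: submx_trans hX1A hAW'.
have [U [hUL hUU']] := ex_simple_below sU' sL hU'L hLU'.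
have [sU _ hU'U hnUU'] := simple_prop hUU'.
have [q [hq hqd]] : exists q, ext_path act Rad (fun j => Rad j.+1) d q /\ q d = (U, U').
  apply: IH; split=> //=; apply/negP => h; move/negP: hnUU'; apply.
  by apply: submx_trans h _; rewrite addsmx_sub submx_refl hAU'.
have hWU'2 : simple_sq (U', W).
  apply: mk_simple => //.
  - by apply/negP => h; move/negP: hX1W; apply; apply: submx_trans hX1U' h.
  move=> V sV hWV hVU'.
  case: (simpleP hx (submod_cap sV sX1) _ (capmxSr _ _)).
  - by rewrite sub_capmx h21 (submx_trans hX2W hWV).
  - move=> h; left.
    have h1 : (V <= (W + X1) :&: V)%MS by rewrite sub_capmx submx_refl andbT addsmxC.
    apply: submx_trans h1 _; apply: submx_trans (modl X1 hWV) _.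
    by rewrite addsmx_sub submx_refl /= capmxC (submx_trans h hX2W).
  - rewrite sub_capmx submx_refl andbT => h; right; by rewrite addsmx_sub h hWV.
have hpt : points_to act Rad (fun j => Rad j.+1) (U, U') (X1, X2).
  exists U, U', W; split.
  - by split.
  - split; [exact: persp_rev | exact: sq_iso_refl].
  - case=> V [sV hWV /andP[hVU'W _] /andP[hVU'U1 hVU'U]].
    case hVW0 : (V <= W)%MS.
      move/negP: hnUU'; apply; apply: submx_trans hVU'U _.
      by rewrite addsmx_sub submx_refl (submx_trans hVW0 hWU').
    have hVL : (V <= L)%MS.
      by apply: submx_trans hUL; apply: submx_trans hVU'U1; apply: addsmxSl.
    have h := hb V sV hWV hVL (negbT hVW0).
    move/negP: hX1W; apply; apply: submx_trans hVU'W; by rewrite sub_capmx h hX1U'.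
  - exists d, d.+1; split.
    + by move=> /n_Sn.
    + rewrite /induced_piece_nz => /andP[h1 _]; move/negP: hnUU'; apply.
      apply: submx_trans (submx_trans _ h1) _.
        by apply: submx_trans (addsmxSl _ W); rewrite sub_capmx hUL submx_refl.
      rewrite addsmx_sub hWU' andbT; apply: submx_trans (capmxSl _ _) hAU'.
    + rewrite /induced_piece_nz => /andP[h1 _]; move/negP: hX1W; apply.
      have h0 : (X1 <= A :&: U + W)%MS.
        by apply: submx_trans (addsmxSl _ _); rewrite sub_capmx hX1A (submx_trans hX1U' hU'U).
      apply: submx_trans (submx_trans h0 h1) _.
      by rewrite addsmx_sub submx_refl andbT (submx_trans (capmxSl _ _) hRW).
    + move=> l hl1 hl2; rewrite /induced_piece_nz => hn; apply: hn; apply/andP; split; last first.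
        by apply: addsmxS (submx_refl _); apply: capmxS (submx_refl _); apply: hmono.
      case: (ltngtP l d) => [hld|hld|hld]; last by rewrite hld in hl1.
        apply: addsmxS (submx_refl _); rewrite sub_capmx capmxSr andbT.
        apply: submx_trans (capmxSr (Rad l) U) _; exact: submx_trans hUL (hmono _ _ hld).
      case: (ltngtP l d.+1) => [hld'|hld'|hld']; last by rewrite hld' in hl2.
        by move: hld hld'; clear; lia.
      rewrite addsmx_sub addsmxSr andbT; apply: submx_trans _ (addsmxSr (Rad l.+1 :&: U)%MS W).
      exact: submx_trans (capmxSl _ _) (submx_trans (hmono _ _ hld') hRW).
exists (fun l => if (l <= d)%N then q l else (X1, X2)); split; last by rewrite ltnn.
case: hq => hq1 hq2; split.
  move=> l hl; case: ifP => h; [exact: hq1 | exact: hx].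
move=> l hl; rewrite ltnS in hl; rewrite hl.
case: (ltngtP l d) => [hld|hld|hld].
- by apply: hq2.
- by move: hld hl; clear; lia.
- by subst l; rewrite hqd.
Qed.


Definition layerS (Soc : nat -> 'M[F]_n) d (x : 'M[F]_n * 'M[F]_n) :=
  [/\ simple_sq x, (soc_prev Soc d <= x.2)%MS & ~~ (x.1 :&: Soc d <= x.2)%MS].

Lemma socP Soc : socle_filtration act Soc -> forall d x, layerS Soc d x ->
  exists p, ext_path act Soc (soc_prev Soc) d p /\ p 0%N = x.
Proof.
move=> hS; have hSf := soc_facts hS; have hmono := soc_mono hS.
elim=> [|d IH] [X1 X2].
  case=> hx _ _; exists (fun _ => (X1, X2)); split=> //; split=> // l _.
have [sL [sA hLA]] := hSf d; have [_ [sR hAR]] := hSf d.+1.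
rewrite /= in hAR.
case=> /= hx hAX2 hX1R.
have [sX1 sX2 h21 h12] := simple_prop hx.
set L := soc_prev Soc d in sL hLA *; set A := Soc d in sA hLA hAR hAX2 *.
set R := Soc d.+1 in sR hAR hX1R *.
have hLX2 : (L <= X2)%MS := submx_trans hLA hAX2.
have hLV0 : (L <= X1 :&: R)%MS.
  by rewrite sub_capmx (submx_trans hLX2 h21) (submx_trans hLA hAR).
have [U [[sU [hLU [hUV0 hUX2]]] _ hmin]] :=
  @ex_min (fun U => submod U /\ (L <= U)%MS /\ (U <= X1 :&: R)%MS /\ ~~ (U <= X2)%MS) (X1 :&: R)%MS
  (conj (submod_cap sX1 sR) (conj hLV0 (conj (submx_refl _) hX1R))).
have hUX1 : (U <= X1)%MS := submx_trans hUV0 (capmxSl _ _).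
have hUR : (U <= R)%MS := submx_trans hUV0 (capmxSr _ _).
have hb : forall V, submod V -> (L <= V)%MS -> (V <= U)%MS -> ~~ (U <= V)%MS -> (V <= X2)%MS.
  move=> V sV h1 h2 h3; apply/idPn => hn; move/negP: h3; apply; apply: hmin => //.
  by split=> //; split=> //; split=> //; exact: submx_trans h2 hUV0.
have hsum : (X1 <= U + X2)%MS.
  case: (simpleP hx (submod_add sU sX2) (addsmxSr _ _) _) => //.
  - by rewrite addsmx_sub hUX1 h21.
  - by rewrite addsmx_sub submx_refl andbT => h; rewrite h in hUX2.
set U' := (U :&: X2)%MS.
have sU' : submod U' by apply: submod_cap.
have hU'U : (U' <= U)%MS by apply: capmxSl.
have hU'X2 : (U' <= X2)%MS by apply: capmxSr.
have hU'A : (U' <= A)%MS.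
  have hsoc : is_soc_over act A R by exact: (hS d.+1).
  have hAB : (A <= A + U)%MS by apply: addsmxSl.
  have hBR : (A + U <= R)%MS by rewrite addsmx_sub hAR hUR.
  have hBX : ~~ (A + U <= X2)%MS.
    by apply/negP => h; move/negP: hUX2; apply; apply: submx_trans (addsmxSr _ _) h.
  have [Y [hY hYB hYX2]] := @cruxS A R sA hsoc (A + U)%MS X2 (submod_add sA sU) hAB hBR hAX2 hBX.
  have [sY _ hAY _] := simple_prop hY.
  case hUY : (U <= Y)%MS.
    case: (simpleP hY (submod_cap sY sX2) _ (capmxSl _ _)).
    - by rewrite sub_capmx hAY hAX2.
    - move=> h; apply: submx_trans h; exact: capmxS hUY (submx_refl _).
    - by rewrite sub_capmx submx_refl /= => h; rewrite h in hYX2.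
  have h1 : (U :&: Y <= X2)%MS.
    apply: hb; [exact: submod_cap | | exact: capmxSl | ].
    + by rewrite sub_capmx hLU (submx_trans hLA hAY).
    + by rewrite sub_capmx submx_refl hUY.
  have h2 : (Y <= (A + U) :&: Y)%MS by rewrite sub_capmx hYB submx_refl.
  have h3 := submx_trans h2 (modl U hAY).
  have h4 : (Y <= X2)%MS.
    by apply: submx_trans h3 _; rewrite addsmx_sub hAX2 h1.
  by rewrite h4 in hYX2.
have hU'L : ~~ (U' <= L)%MS.
  apply/negP => h.
  have hUL : simple_sq (U, L).
    apply: mk_simple => //.
    - by apply/negP => h'; move/negP: hUX2; apply; apply: submx_trans h' hLX2.
    - move=> V sV h1 h2; case hUV: (U <= V)%MS; [by right | left].
      apply: submx_trans h; rewrite sub_capmx h2; apply: hb => //; by rewrite hUV.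
  have [_ hXS _] := hS d; move: (hXS U hUL) => hUA.
  by move/negP: hUX2; apply; apply: submx_trans hUA hAX2.
have hLU' : (L <= U')%MS by rewrite sub_capmx hLU hLX2.
have [W [hLW hU'W]] := ex_simple_above sL sU' hLU' hU'L.
have [_ sW hWU' hnU'W] := simple_prop hU'W.
have hUU' : simple_sq (U, U').
  apply: mk_simple => //.
  - by apply/negP => h; move/negP: hUX2; apply; apply: submx_trans h hU'X2.
  move=> V sV hU'V hVU.
  case: (simpleP hx (submod_add sV sX2) (addsmxSr _ _) _).
  - by rewrite addsmx_sub h21 (submx_trans hVU hUX1).
  - rewrite addsmx_sub submx_refl andbT => h; left; by rewrite sub_capmx hVU h.
  - move=> h; right.
    have h1 : (U <= (V + X2) :&: U)%MS by rewrite sub_capmx submx_refl (submx_trans hUX1 h).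
    apply: submx_trans h1 _; apply: submx_trans (modl X2 hVU) _.
    by rewrite addsmx_sub submx_refl /= capmxC.
have hiso : sq_iso (U, U') (X1, X2).
  exists 1%:M; split=> /=; rewrite ?mulmx1 //.
  - by move=> i; rewrite mulmx1 mul1mx subrr mulmx0 sub0mx.
  - by move=> v h1; rewrite mulmx1 => h2; rewrite sub_capmx h1 h2.
have [q [hq hq0]] : exists q, ext_path act Soc (soc_prev Soc) d q /\ q 0%N = (U', W).
  apply: IH; split=> //=; apply/negP => h; move/negP: hnU'W; apply.
  by apply: submx_trans h; rewrite sub_capmx submx_refl hU'A.
have hpt : points_to act Soc (soc_prev Soc) (X1, X2) (U', W).
  exists U, U', W; split.
  - by split.
  - split; [exact: sq_iso_refl | exact: hiso].
  - case=> V [sV hWV /andP[hVU'W _] /andP[hVU'U1 hVU'U]].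
    have hVU : (V <= U)%MS := submx_trans (addsmxSl _ _) hVU'U1.
    case hUV : (U <= V)%MS.
      move/negP: hnU'W; apply; apply: submx_trans hVU'W.
      by rewrite sub_capmx submx_refl (submx_trans hU'U hUV).
    have h := hb V sV (submx_trans hLW hWV) hVU (negbT hUV).
    move/negP: hUX2; apply; apply: submx_trans hVU'U _.
    by rewrite addsmx_sub hU'X2 h.
  - exists d, d.+1; split.
    + by move=> /n_Sn.
    + rewrite /induced_piece_nz => /andP[h1 _]; move/negP: hnU'W; apply.
      have h0 : (U' <= A :&: U + W)%MS.
        by apply: submx_trans (addsmxSl _ _); rewrite sub_capmx hU'A hU'U.
      apply: submx_trans (submx_trans h0 h1) _.
      by rewrite addsmx_sub submx_refl andbT (submx_trans (capmxSl _ _) hLW).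
    + rewrite /induced_piece_nz => /andP[h1 _]; move/negP: hUX2; apply.
      have h0 : (U <= R :&: U + W)%MS.
        by apply: submx_trans (addsmxSl _ _); rewrite sub_capmx hUR submx_refl.
      apply: submx_trans (submx_trans h0 h1) _; rewrite /= -/A.
      rewrite addsmx_sub (submx_trans hWU' hU'X2) andbT.
      by apply: submx_trans (capmxSl _ _) hAX2.
    + move=> l hl1 hl2; rewrite /induced_piece_nz => hn; apply: hn; apply/andP; split; last first.
        by apply: addsmxS (submx_refl _); apply: capmxS (submx_refl _); exact: (hSf l).2.2.
      case: (ltngtP l d) => [hld|hld|hld]; last by rewrite hld in hl1.
        rewrite addsmx_sub addsmxSr andbT; apply: submx_trans _ (addsmxSr (soc_prev Soc l :&: U)%MS W).
        apply: submx_trans (capmxSl _ _) _; apply: submx_trans hLW.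
        rewrite /L; case: (d) hld => [|d'] //= hld; exact: hmono.
      case: (ltngtP l d.+1) => [hld'|hld'|hld']; last by rewrite hld' in hl2.
        by move: hld hld'; clear; lia.
      apply: addsmxS (submx_refl _); rewrite sub_capmx capmxSr andbT.
      apply: submx_trans (capmxSr (Soc l) U) _; apply: submx_trans hUR _.
      rewrite /R; case: (l) hld' => [|l'] //= hld'; exact: hmono.
exists (fun l => if l == 0%N then (X1, X2) else q l.-1); split=> //.
case: hq => hq1 hq2; split.
  by move=> [|l] hl //=; apply: hq1.
by move=> [|l] hl //=; [rewrite hq0 | apply: hq2].
Qed.

End H.

Theorem corollary4p4 (F : fieldType) (n k : nat) (act : 'I_k -> 'M[F]_n)
  (Rad Soc : nat -> 'M[F]_n) (sigma : 'M[F]_n * 'M[F]_n) :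
  mult_free act ->
  radical_filtration act Rad ->
  socle_filtration act Soc ->
  simple_sq act sigma ->
  (forall d : nat, constituent act (Rad d) (Rad d.+1) sigma ->
     exists p : nat -> 'M[F]_n * 'M[F]_n,
       ext_path act Rad (fun j => Rad j.+1) d p /\ sq_iso act (p d) sigma) /\
  (forall d : nat, constituent act (Soc d) (soc_prev Soc d) sigma ->
     exists p : nat -> 'M[F]_n * 'M[F]_n,
       ext_path act Soc (soc_prev Soc) d p /\ sq_iso act (p 0%N) sigma).
Proof.
move=> _ hR hS _; split.
- move=> d [U0 [W0 [hW0 hU0 hs hiso]]].
  have [_ _ _ hn] := simple_prop hs.
  have [|p [hp hpd]] := @radP _ _ _ act Rad hR d (U0, W0).
    split=> //=; apply/negP => h; move/negP: hn; apply; apply: submx_trans h _.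
    by rewrite addsmx_sub submx_refl hW0.
  by exists p; split=> //; rewrite hpd.
- move=> d [U0 [W0 [hW0 hU0 hs hiso]]].
  have [_ _ _ hn] := simple_prop hs.
  have [|p [hp hp0]] := @socP _ _ _ act Soc hS d (U0, W0).
    split=> //=; apply/negP => h; move/negP: hn; apply; apply: submx_trans _ h.
    by rewrite sub_capmx submx_refl hU0.
  by exists p; split=> //; rewrite hp0.
Qed.
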